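(* Assume conditions (C1) and (C3) hold, and that either (a) $A$ is $L$-Lipschitz continuous and $r$-strongly monotone and $B$ is maximal monotone, or (b) $A$ is $L$-Lipschitz continuous and monotone and $B$ is maximal monotone and $r$-strongly monotone (for some $r>0$). Then the sequence $\{x_n\}$ generated by Algorithm 3.1 converges strongly to a point $p\in\Omega$.
   Context: Let $H$ be a real Hilbert space, $A:H\to H$ a single-valued mapping and $B:H\to 2^H$ a set-valued mapping, and let $\Omega:=(A+B)^{-1}(0)=\{x\in H:\ 0\in Ax+Bx\}$. Algorithm 3.1 is the following iteration. Fix $x_0,x_1\in H$, $\mu\in(0,1)$, $\lambda_1>0$, real sequences $\{\alpha_n\},\{\beta_n\},\{\theta_n\}$ and nonnegative real sequences $\{\mu_n\},\{p_n\}$. For $n=1,2,\dots$ compute $w_n=x_n+\alpha_n(x_n-x_{n-1})$, $z_n=x_n+\beta_n(x_n-x_{n-1})$, $y_n=(I+\lambda_nB)^{-1}(I-\lambda_nA)w_n$, and set $\lambda_{n+1}=\min\{(\mu_n+\mu)\|w_n-y_n\|/\|Aw_n-Ay_n\|,\ \lambda_n+p_n\}$ if $Aw_n\neq Ay_n$, and $\lambda_{n+1}=\lambda_n+p_n$ otherwise. If $w_n=y_n$ the algorithm stops (then $y_n\in\Omega$). Otherwise set $x_{n+1}=(1-\theta_n)z_n+\theta_n\big(y_n-\lambda_n(Ay_n-Aw_n)\big)$ and continue. Here $I$ is the identity and $(I+\lambda B)^{-1}$ is the resolvent of $B$. Throughout, it is assumed that the algorithm does not stop, so that infinite sequences $\{x_n\},\{w_n\},\{z_n\},\{y_n\},\{\lambda_n\}$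 are generated. Condition (C1): $\Omega\neq\emptyset$. Condition (C3): there is $\varepsilon\in(1,\infty)$ such that (i) $0\le\alpha_n\le1$; (ii) $0\le\beta_n\le\beta_{n+1}\le\beta<\frac{3+2\varepsilon-\sqrt{8\varepsilon+17}}{2\varepsilon}$ for some constant $\beta$; (iii) $0<\theta<\theta_n\le\theta_{n+1}\le\frac{1}{1+\varepsilon}$ for some constant $\theta$; (iv) $a_n:=(1-\theta_n)\beta_n+\theta_n\alpha_n$ is non-decreasing; (v) $\sum_{n=1}^\infty p_n<\infty$ and $\lim_{n\to\infty}\mu_n=0$. A set-valued $B$ is $r$-strongly monotone if $\langle u-v,x-y\rangle\ge r\|x-y\|^2$ whenever $u\in Bx$, $v\in By$; a single-valued $A$ is $r$-strongly monotone if $\langle Ax-Ay,x-y\rangle\ge r\|x-y\|^2$ for all $x,y$. *)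

(* Defs.v *)
From HB Require Import structures.
From mathcomp Require Import all_boot all_order all_algebra.
From mathcomp Require Import all_classical all_reals all_analysis.
Set Implicit Arguments. Unset Strict Implicit. Unset Printing Implicit Defensive.
Import Order.TTheory GRing.Theory Num.Theory.
Import numFieldNormedType.Exports.
Local Open Scope classical_set_scope.
Local Open Scope ring_scope.

(* A real Hilbert space is modelled as a complete normed module H over a
   realType R together with an inner product ip inducing its norm. *)
Definition is_inner_product (R : realType) (H : normedModType R)
  (ip : H -> H -> R) : Prop :=
  (forall x y, ip x y = ip y x) /\
  (forall (a : R) (x y z : H), ip (a *: x + y) z = a * ip x z + ip y z) /\
  (forall x, ip x x = `|x| ^+ 2).

Definition set_monotone (R : realType) (H : normedModType R)
  (ip : H -> H -> R) (B : H -> set H) : Prop :=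
  forall x y u v, B x u -> B y v -> 0 <= ip (u - v) (x - y).

Definition set_strongly_monotone (R : realType) (H : normedModType R)
  (ip : H -> H -> R) (r : R) (B : H -> set H) : Prop :=
  forall x y u v, B x u -> B y v -> r * `|x - y| ^+ 2 <= ip (u - v) (x - y).

Definition maximal_monotone (R : realType) (H : normedModType R)
  (ip : H -> H -> R) (B : H -> set H) : Prop :=
  set_monotone ip B /\
  forall B' : H -> set H, set_monotone ip B' ->
    (forall x, B x `<=` B' x) -> forall x, B' x = B x.

Definition op_monotone (R : realType) (H : normedModType R)
  (ip : H -> H -> R) (A : H -> H) : Prop :=
  forall x y, 0 <= ip (A x - A y) (x - y).

Definition op_strongly_monotone (R : realType) (H : normedModType R)
  (ip : H -> H -> R) (r : R) (A : H -> H) : Prop :=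
  forall x y, r * `|x - y| ^+ 2 <= ip (A x - A y) (x - y).

Definition lipschitz_op (R : realType) (H : normedModType R)
  (L : R) (A : H -> H) : Prop :=
  forall x y, `|A x - A y| <= L * `|x - y|.

(* the resolvent (I + lam B)^{-1} applied to z, as a set:
   { y | z \in y + lam B y } *)
Definition resolvent (R : realType) (H : normedModType R)
  (B : H -> set H) (lam : R) (z : H) : set H :=
  [set y | exists u, B y u /\ z = y + lam *: u].

Definition zeros_sum (R : realType) (H : normedModType R)
  (A : H -> H) (B : H -> set H) : set H :=
  [set x | exists u, B x u /\ A x + u = 0].

(* Main.v *)
Require Import Defs.
From HB Require Import structures.
From mathcomp Require Import all_boot all_order all_algebra.
From mathcomp Require Import all_classical all_reals all_analysis.
From mathcomp Require Import ring lra.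
Import Order.TTheory GRing.Theory Num.Theory.
Import numFieldNormedType.Exports.
Local Open Scope classical_set_scope.
Local Open Scope ring_scope.
Lemma ip0l {R : realType} {H : normedModType R} {ip : H -> H -> R} :
  is_inner_product ip -> forall z, ip 0 z = 0.
Proof.
move=> [hC [hL hN]] z.
have h := hL 1 0 0 z; rewrite scaler0 addr0 mul1r in h. lra.
Qed.

Lemma ipDl {R : realType} {H : normedModType R} {ip : H -> H -> R} :
  is_inner_product ip -> forall x y z, ip (x + y) z = ip x z + ip y z.
Proof. move=> [hC [hL hN]] x y z; by rewrite -[x]scale1r hL mul1r scale1r. Qed.

Lemma ipZl {R : realType} {H : normedModType R} {ip : H -> H -> R} :
  is_inner_product ip -> forall a x z, ip (a *: x) z = a * ip x z.
Proof.
move=> hip a x z; have := hip => [[hC [hL hN]]].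
by rewrite -[a *: x]addr0 hL (ip0l hip) addr0.
Qed.

Lemma ipNl {R : realType} {H : normedModType R} {ip : H -> H -> R} :
  is_inner_product ip -> forall x z, ip (- x) z = - ip x z.
Proof. move=> hip x z; by rewrite -scaleN1r (ipZl hip) mulN1r. Qed.

Lemma ipBl {R : realType} {H : normedModType R} {ip : H -> H -> R} :
  is_inner_product ip -> forall x y z, ip (x - y) z = ip x z - ip y z.
Proof. move=> hip x y z; by rewrite (ipDl hip) (ipNl hip). Qed.

Lemma ipDr {R : realType} {H : normedModType R} {ip : H -> H -> R} :
  is_inner_product ip -> forall x y z, ip z (x + y) = ip z x + ip z y.
Proof. move=> hip x y z; have := hip => [[hC _]]; by rewrite !(hC z) (ipDl hip). Qed.

Lemma ipZr {R : realType} {H : normedModType R} {ip : H -> H -> R} :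
  is_inner_product ip -> forall a x z, ip z (a *: x) = a * ip z x.
Proof. move=> hip a x z; have := hip => [[hC _]]; by rewrite !(hC z) (ipZl hip). Qed.

Lemma ipBr {R : realType} {H : normedModType R} {ip : H -> H -> R} :
  is_inner_product ip -> forall x y z, ip z (x - y) = ip z x - ip z y.
Proof.
move=> hip x y z; have := hip => [[hC _]]; by rewrite !(hC z) (ipBl hip).
Qed.

Lemma ipNr {R : realType} {H : normedModType R} {ip : H -> H -> R} :
  is_inner_product ip -> forall x z, ip z (- x) = - ip z x.
Proof. move=> hip x z; have := hip => [[hC _]]; by rewrite !(hC z) (ipNl hip). Qed.

Lemma ipnn {R : realType} {H : normedModType R} {ip : H -> H -> R} :
  is_inner_product ip -> forall x, `|x| ^+ 2 = ip x x.
Proof. by move=> [_ [_ hN]] x; rewrite hN. Qed.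

Ltac ipexp hip :=
  rewrite ?(ipnn hip);
  do ?[rewrite (ipDl hip) | rewrite (ipBl hip) | rewrite (ipZl hip) | rewrite (ipNl hip)
      | rewrite (ipDr hip) | rewrite (ipBr hip) | rewrite (ipZr hip) | rewrite (ipNr hip)].

Lemma comb2 {R : realType} {H : normedModType R} {ip : H -> H -> R} :
  is_inner_product ip -> forall (t : R) (a b : H),
  `|(1 - t) *: a + t *: b| ^+ 2 =
  (1 - t) * `|a| ^+ 2 + t * `|b| ^+ 2 - t * (1 - t) * `|a - b| ^+ 2.
Proof.
move=> hip t a b; have := hip => [[hC _]].
ipexp hip. rewrite (hC b a). ring.
Qed.

Lemma tseng_id {R : realType} {H : normedModType R} {ip : H -> H -> R} :
  is_inner_product ip -> forall a b c : H,
  `|b + c| ^+ 2 = `|a + b| ^+ 2 - `|a| ^+ 2 + `|c| ^+ 2 - 2 * ip (a - c) b.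
Proof.
move=> hip a b c; have := hip => [[hC _]].
ipexp hip. rewrite (hC b a) (hC c b). ring.
Qed.

Lemma young_b {R : realType} {H : normedModType R} {ip : H -> H -> R} :
  is_inner_product ip -> forall (b : R) (X Y : H), 0 <= b ->
  (1 - b) * `|X| ^+ 2 - b * (1 - b) * `|Y| ^+ 2 <= `|X - b *: Y| ^+ 2.
Proof.
move=> hip b X Y hb.
have -> : X - b *: Y = (1 - b) *: X + b *: (X - Y).
  by rewrite scalerBr scalerBl scale1r addrA subrK.
rewrite (comb2 hip) (_ : X - (X - Y) = Y); last by rewrite opprB addrC subrK.
have : 0 <= `|X - Y| ^+ 2 by rewrite exprn_ge0. nra.
Qed.
Lemma veq {R : realType} {H : normedModType R} {ip : H -> H -> R} :
  is_inner_product ip -> forall u v : H, (forall q, ip u q = ip v q) -> u = v.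
Proof.
move=> hip u v h; apply/eqP; rewrite -subr_eq0 -normr_eq0 -sqrf_eq0 (ipnn hip).
by rewrite (ipBl hip) h subrr.
Qed.

Ltac vring hip := apply: (veq hip) => ?; ipexp hip; ring.

Lemma comb_real {R : realType} {P Zp Up Wp Q Q' D D' W Y C UZ IPv t al be lam r del : R} :
 P = (1 - t) * Zp + t * Up - t * (1 - t) * UZ ->
 Zp = (1 - - be) * Q + - be * Q' - - be * (1 - - be) * D ->
 Wp = (1 - - al) * Q + - al * Q' - - al * (1 - - al) * D ->
 Up = Wp - W + C - 2 * IPv ->
 (1 - be) * D' - be * (1 - be) * D <= t ^+ 2 * UZ ->
 C <= del ^+ 2 * W -> lam * r * Y <= IPv -> 0 < t -> t < 1 ->
 P <= (1 + ((1 - t) * be + t * al)) * Q - ((1 - t) * be + t * al) * Q'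
      + ((1 - t) * be * (1 + be) + t * al * (1 + al)) * D
      - t * (1 - del ^+ 2) * W - 2 * t * lam * r * Y
      - (1 - t) / t * ((1 - be) * D' - be * (1 - be) * D).
Proof.
move=> eP eZ eW eU hY hC hI ht0 ht1.
have hUZt : t * (1 - t) * UZ = (1 - t) / t * (t ^+ 2 * UZ).
  field; exact: lt0r_neq0.
have hUZ2 : (1 - t) / t * ((1 - be) * D' - be * (1 - be) * D) <= (1 - t) / t * (t ^+ 2 * UZ).
  apply: ler_wpM2l => //. apply: divr_ge0; lra.
have hmon2 : t * (lam * r * Y) <= t * IPv by apply: ler_wpM2l => //; lra.
have ht2 : t * C <= t * (del ^+ 2 * W) by apply: ler_wpM2l => //; lra.
rewrite eP eZ eU eW. lra.
Qed.

Lemma vstep {R : realType} {H : normedModType R} {ip : H -> H -> R} :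
 is_inner_product ip ->
 forall (xn1 xn xm p w z y Aw Ay : H) (t al be lam r del : R),
 w = xn + al *: (xn - xm) -> z = xn + be *: (xn - xm) ->
 xn1 = (1 - t) *: z + t *: (y - lam *: (Ay - Aw)) ->
 lam * r * `|y - p| ^+ 2 <= ip ((w - y) - lam *: (Aw - Ay)) (y - p) ->
 lam * `|Aw - Ay| <= del * `|w - y| -> 0 <= lam -> 0 <= del ->
 0 < t -> t < 1 -> 0 <= be ->
 `|xn1 - p| ^+ 2 <= (1 + ((1 - t) * be + t * al)) * `|xn - p| ^+ 2
      - ((1 - t) * be + t * al) * `|xm - p| ^+ 2
      + ((1 - t) * be * (1 + be) + t * al * (1 + al)) * `|xn - xm| ^+ 2
      - t * (1 - del ^+ 2) * `|w - y| ^+ 2 - 2 * t * lam * r * `|y - p| ^+ 2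
      - (1 - t) / t * ((1 - be) * `|xn1 - xn| ^+ 2 - be * (1 - be) * `|xn - xm| ^+ 2).
Proof.
move=> hip xn1 xn xm p w z y Aw Ay t al be lam r del hw hz hx hmon hlip hlam hdel ht0 ht1 hbe.
have hC : forall a b, ip a b = ip b a by case: hip.
set u := y - lam *: (Ay - Aw).
have h1 : xn1 - p = (1 - t) *: (z - p) + t *: (u - p) by rewrite /u hx; vring hip.
have hUZ : (z - p) - (u - p) = (-1) *: (u - z) by rewrite /u; vring hip.
have hX : (xn1 - xn) - be *: (xn - xm) = t *: (u - z) by rewrite /u hx hz; vring hip.
have hZ : z - p = (1 - - be) *: (xn - p) + (- be) *: (xm - p) by rewrite hz; vring hip.
have hW : w - p = (1 - - al) *: (xn - p) + (- al) *: (xm - p) by rewrite hw; vring hip.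
have hd : (xn - p) - (xm - p) = xn - xm by vring hip.
have hU : u - p = (y - p) + lam *: (Aw - Ay) by rewrite /u; vring hip.
have hWa : w - p = (w - y) + (y - p) by vring hip.
have eP := comb2 hip t (z - p) (u - p). rewrite -h1 hUZ in eP.
have eZ := comb2 hip (- be) (xn - p) (xm - p). rewrite -hZ hd in eZ.
have eW := comb2 hip (- al) (xn - p) (xm - p). rewrite -hW hd in eW.
have eU := tseng_id hip (w - y) (y - p) (lam *: (Aw - Ay)). rewrite -hU -hWa in eU.
have hY := young_b hip be (xn1 - xn) (xn - xm) hbe. rewrite hX in hY.
have n1 : `|(-1) *: (u - z)| ^+ 2 = `|u - z| ^+ 2.
  by rewrite normrZ normrN normr1 mul1r.
have n2 : `|t *: (u - z)| ^+ 2 = t ^+ 2 * `|u - z| ^+ 2.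
  by rewrite normrZ exprMn real_normK // num_real.
have n3 : `|lam *: (Aw - Ay)| ^+ 2 <= del ^+ 2 * `|w - y| ^+ 2.
  rewrite normrZ ger0_norm // -exprMn.
  have h0 : 0 <= lam * `|Aw - Ay| by apply: mulr_ge0.
  have : 0 <= lam * `|Aw - Ay| <= del * `|w - y| by rewrite h0 hlip.
  move=> /andP[h0' h1']. nra.
rewrite n1 in eP. rewrite n2 in hY.
exact: (comb_real eP eZ eW eU hY n3 hmon ht0 ht1).
Qed.
Lemma quad_pos {R : realType} (eps bet : R) : 1 < eps ->
  bet < (3 + 2 * eps - Num.sqrt (8 * eps + 17)) / (2 * eps) ->
  0 < eps ^+ 2 * bet ^+ 2 - eps * (3 + 2 * eps) * bet + (eps ^+ 2 + eps - 2) /\ bet < 1.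
Proof.
move=> he hb.
have he2 : 0 < 2 * eps by lra.
rewrite ltr_pdivlMr // in hb.
set s := Num.sqrt (8 * eps + 17) in hb.
have hs0 : 0 <= s by exact: sqrtr_ge0.
have hs2 : s ^+ 2 = 8 * eps + 17 by rewrite sqr_sqrtr //; lra.
have hs3 : 3 < s by nra.
split; last by nra.
have : s ^+ 2 < (3 + 2 * eps - 2 * eps * bet) ^+ 2 by nra.
rewrite hs2. nra.
Qed.

Lemma sq_lt {R : realType} (a b : R) : 0 <= a -> 0 < b -> a ^+ 2 < b ^+ 2 -> a < b.
Proof. move=> ha hb h. case: (ltP a b) => // hba. nra. Qed.

Lemma mon_step {R : realType} {H : normedModType R} {ip : H -> H -> R} :
 is_inner_product ip -> forall (A : H -> H) (p up yy ww v : H) (l r : R),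
 A p + up = 0 -> ww - l *: A ww = yy + l *: v -> 0 <= l ->
 r * `|yy - p| ^+ 2 <= ip (v - up) (yy - p) + ip (A yy - A p) (yy - p) ->
 l * r * `|yy - p| ^+ 2 <= ip ((ww - yy) - l *: (A ww - A yy)) (yy - p).
Proof.
move=> hip A p up yy ww v l r hAp heq hl hm.
have -> : (ww - yy) - l *: (A ww - A yy) = l *: ((v - up) + (A yy - A p)).
  apply: (veq hip) => q; ipexp hip.
  have hq := congr1 (fun t => ip t q) heq. have hq2 := congr1 (fun t => ip t q) hAp.
  simpl in hq, hq2. rewrite (ip0l hip) in hq2. ipexp hip.
  move: hq hq2; ipexp hip => hq hq2.
  have : l * (ip (A p) q + ip up q) = 0 by rewrite hq2 mulr0.
  lra.
rewrite (ipZl hip) (ipDl hip) -mulrA. exact: ler_wpM2l.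
Qed.
Lemma gmono {R : realType} (b bet t ts : R) :
  0 <= b -> b <= bet -> bet < 1 -> 0 < t -> t <= ts -> ts <= 1/2 ->
  (1 - ts) * (1 - bet) ^+ 2 - ts * (1 - ts) * (bet * (1 + bet)) - 2 * ts ^+ 2
  <= (1 - t) * (1 - b) ^+ 2 - t * (1 - t) * (b * (1 + b)) - 2 * t ^+ 2.
Proof.
move=> hb hbb hb1 ht hts hts2.
have e1 : (1 - t) * (1 - b) ^+ 2 - t * (1 - t) * (b * (1 + b)) - 2 * t ^+ 2
  - ((1 - t) * (1 - bet) ^+ 2 - t * (1 - t) * (bet * (1 + bet)) - 2 * t ^+ 2)
  = (1 - t) * ((bet - b) * ((2 - b - bet) + t * (1 + b + bet))) by ring.
have e2 : (1 - t) * (1 - bet) ^+ 2 - t * (1 - t) * (bet * (1 + bet)) - 2 * t ^+ 2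
  - ((1 - ts) * (1 - bet) ^+ 2 - ts * (1 - ts) * (bet * (1 + bet)) - 2 * ts ^+ 2)
  = (ts - t) * ((1 - bet) ^+ 2 + bet * (1 + bet) * (1 - ts - t) + 2 * (ts + t)) by ring.
have p1 : 0 <= (1 - t) * ((bet - b) * ((2 - b - bet) + t * (1 + b + bet))).
  apply: mulr_ge0; first lra.
  apply: mulr_ge0; first lra.
  have : 0 <= t * (1 + b + bet) by apply: mulr_ge0; lra.
  lra.
have p2 : 0 <= (ts - t) * ((1 - bet) ^+ 2 + bet * (1 + bet) * (1 - ts - t) + 2 * (ts + t)).
  apply: mulr_ge0; first lra.
  have : 0 <= (1 - bet) ^+ 2 by rewrite sqr_ge0.
  have : 0 <= bet * (1 + bet) * (1 - ts - t).
    apply: mulr_ge0; last lra. apply: mulr_ge0; lra.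
  lra.
lra.
Qed.

Definition Gc {R : realType} (eps bet : R) :=
  (eps ^+ 2 * bet ^+ 2 - eps * (3 + 2 * eps) * bet + (eps ^+ 2 + eps - 2)) / (1 + eps) ^+ 2.

Lemma keyG {R : realType} (eps bet t b a : R) :
  1 < eps -> 0 <= b -> b <= bet -> bet < 1 -> 0 < t -> t <= 1 / (1 + eps) ->
  0 <= a -> a <= 1 ->
  0 < eps ^+ 2 * bet ^+ 2 - eps * (3 + 2 * eps) * bet + (eps ^+ 2 + eps - 2) ->
  Gc eps bet <= (1 - t) / t * (1 - b) ^+ 2 - ((1 - t) * b * (1 + b) + t * a * (1 + a)).
Proof.
move=> he hb hbb hb1 ht hts ha0 ha1 hq.
have hep : 0 < 1 + eps by lra.
have hts2 : 1 / (1 + eps) <= 1/2.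
  rewrite ler_pdivrMr //. lra.
have hgeq : (1 - 1 / (1 + eps)) * (1 - bet) ^+ 2 - 1 / (1 + eps) * (1 - 1 / (1 + eps))
   * (bet * (1 + bet)) - 2 * (1 / (1 + eps)) ^+ 2 = Gc eps bet.
  rewrite /Gc. field. lra.
have hg := @gmono _ b bet t _ hb hbb hb1 ht hts hts2.
rewrite hgeq in hg.
have hG : 0 < Gc eps bet.
  rewrite /Gc divr_gt0 //; exact: exprn_gt0.
have ha : a * (1 + a) <= 2 by nra.
have ht1 : t < 1 by lra.
set L := (1 - t) / t * (1 - b) ^+ 2 - ((1 - t) * b * (1 + b) + t * a * (1 + a)).
have hL : t * L = (1 - t) * (1 - b) ^+ 2 - t * (1 - t) * (b * (1 + b)) - t ^+ 2 * (a * (1 + a)).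
  rewrite /L. field. lra.
have hL2 : Gc eps bet <= t * L.
  rewrite hL. have : t ^+ 2 * (a * (1 + a)) <= t ^+ 2 * 2.
    rewrite ler_pM2l //; exact: exprn_gt0.
  lra.
have : t * L <= L.
  case: (lerP 0 L) => hL0; first by rewrite ler_piMl //; lra.
  have : t * L < 0 by rewrite pmulr_rlt0.
  lra.
lra.
Qed.
Lemma lyap {R : realType} {P Q Q' D D' W Y th t t1 al be be1 a1 del lam lmin r eps bet : R} :
 P <= (1 + ((1 - t) * be + t * al)) * Q - ((1 - t) * be + t * al) * Q'
      + ((1 - t) * be * (1 + be) + t * al * (1 + al)) * D
      - t * (1 - del ^+ 2) * W - 2 * t * lam * r * Y
      - (1 - t) / t * ((1 - be) * D' - be * (1 - be) * D) ->
 1 < eps -> 0 < th -> th < t -> t <= t1 -> t1 <= 1 / (1 + eps) -> 0 <= be -> be <= be1 ->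
 be1 <= bet -> bet < 1 -> 0 <= al -> al <= 1 -> (1 - t) * be + t * al <= a1 ->
 0 <= Q -> 0 <= D -> 0 <= D' -> 0 <= W -> 0 <= Y -> del ^+ 2 <= 1 ->
 lmin <= lam -> 0 <= lmin -> 0 <= r ->
 0 < eps ^+ 2 * bet ^+ 2 - eps * (3 + 2 * eps) * bet + (eps ^+ 2 + eps - 2) ->
 P - a1 * Q + (1 - t1) / t1 * (1 - be1) * D' + Gc eps bet * D
   + th * (1 - del ^+ 2) * W + 2 * th * lmin * r * Y
  <= Q - ((1 - t) * be + t * al) * Q' + (1 - t) / t * (1 - be) * D.
Proof.
move=> hP he hth htht htt1 ht1 hbe hbe1 hbet hb1 hal0 hal1 ha1 hQ hD hD' hW hY hdel hlam hlmin hr hq.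
have ht : 0 < t by lra.
have hep : 0 < 1 + eps by lra.
have ht1' : 0 < t1 by lra.
have hts : t <= 1 / (1 + eps) by lra.
have hk := @keyG _ eps bet t be al he hbe (le_trans hbe1 hbet) hb1 ht hts hal0 hal1 hq.
set G := Gc eps bet in hk *.
set rho := (1 - t) / t in hP hk *.
set rho1 := (1 - t1) / t1.
have hrho1 : rho1 <= rho.
  rewrite /rho1 /rho ler_pdivrMr // mulrAC ler_pdivlMr //; nra.
have hrho1p : 0 <= rho1.
  rewrite /rho1 divr_ge0 //; last lra.
  have : 1 / (1 + eps) <= 1/2 by rewrite ler_pdivrMr //; lra.
  lra.
have e1 : rho1 * (1 - be1) * D' <= rho * (1 - be) * D'.
  apply: ler_wpM2r => //. apply: ler_pM; lra.
have e2 : ((1 - t) * be + t * al) * Q <= a1 * Q by apply: ler_wpM2r.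
have e3 : (((1 - t) * be * (1 + be) + t * al * (1 + al)) + G - rho * (1 - be) ^+ 2) * D <= 0.
  apply: mulr_le0_ge0 => //. lra.
have e4 : th * (1 - del ^+ 2) * W <= t * (1 - del ^+ 2) * W.
  apply: ler_wpM2r => //. apply: ler_wpM2r; lra.
have e5 : 2 * th * lmin * r * Y <= 2 * t * lam * r * Y.
  apply: ler_wpM2r => //. apply: ler_wpM2r => //. apply: ler_pM; lra.
have e6 : rho * ((1 - be) * D' - be * (1 - be) * D) =
   rho * (1 - be) * D' - rho * be * (1 - be) * D by ring.
rewrite e6 in hP.
have e7 : (((1 - t) * be * (1 + be) + t * al * (1 + al)) + G - rho * (1 - be) ^+ 2) * D
  = ((1 - t) * be * (1 + be) + t * al * (1 + al)) * D + G * D + rho * be * (1 - be) * D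
    - rho * (1 - be) * D by ring.
lra.
Qed.
Lemma lyap_conv {R : realType} (G : nat -> R) (N : nat) (m : R) :
  (forall n, (N <= n)%N -> G n.+1 <= G n) -> (forall n, (N <= n)%N -> m <= G n) ->
  (fun n => G n - G n.+1) @ \oo --> (0 : R).
Proof.
move=> hdec hlb.
have hc : cvgn G.
  apply: (@near_nonincreasing_is_cvgn _ _ m).
    exists N => // k /= hk j hkj.
    elim: j hkj => [|j IH]; first by rewrite leqn0 => /eqP ->.
    rewrite leq_eqVlt => /orP[/eqP <- //|hkj].
    apply: le_trans (IH hkj). apply: hdec. exact: leq_trans hk hkj.
  by exists N => // k /= hk; apply: hlb.
have h1 : G @ \oo --> limn G := hc.
have h2 : [sequence G n.+1]_n @ \oo --> limn G. rewrite cvg_shiftS. exact: h1.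
rewrite -(subrr (limn G)). exact: cvgB h1 h2.
Qed.

Lemma lam_conv {R : realType} (lam p : nat -> R) :
  (forall n, (0 < n)%N -> 0 <= lam n) -> (forall n, (0 < n)%N -> lam n.+1 <= lam n + p n) ->
  (forall n, 0 <= p n) -> cvgn (series p) -> cvgn lam.
Proof.
move=> hl hs hp hc.
have hnd : {homo series p : n m / (n <= m)%N >-> n <= m}.
  apply/nondecreasing_seqP => n; rewrite seriesSr lerDl; exact: hp.
have hle := nondecreasing_cvgn_le hnd hc.
have hv : cvgn (fun n => lam n - series p n).
  apply: (@near_nonincreasing_is_cvgn _ _ (- limn (series p))).
    exists 1%N => // k /= hk j hkj.
    elim: j hkj => [|j IH]; first by rewrite leqn0 => /eqP ->.
    rewrite leq_eqVlt => /orP[/eqP <- //|hkj].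
    apply: le_trans (IH hkj). rewrite seriesSr.
    have := hs j (leq_trans hk hkj). lra.
  exists 1%N => // k /= hk. have := hl k hk. have := hle k. lra.
have -> : lam = (fun n => lam n - series p n) + series p.
  by apply/funext => n /=; rewrite subrK.
exact: is_cvgD hv hc.
Qed.
Theorem theorem4p1 (R : realType) (H : completeNormedModType R)
  (ip : H -> H -> R) (A : H -> H) (B : H -> set H)
  (mu lam1 : R) (alpha beta theta mun p : nat -> R)
  (x w z y : nat -> H) (lam : nat -> R) :
  is_inner_product ip ->
  (* operator hypotheses: case (a) or case (b) *)
  ((exists L r : R, 0 < L /\ 0 < r /\ lipschitz_op L A /\
       op_strongly_monotone ip r A /\ maximal_monotone ip B) \/
   (exists L r : R, 0 < L /\ 0 < r /\ lipschitz_op L A /\ op_monotone ip A /\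
       maximal_monotone ip B /\ set_strongly_monotone ip r B)) ->
  (* (C1) *)
  zeros_sum A B !=set0 ->
  (* parameters *)
  0 < mu < 1 -> 0 < lam1 ->
  (forall n, 0 <= mun n) -> (forall n, 0 <= p n) ->
  (* (C3) *)
  (exists eps : R, 1 < eps /\
     (forall n, (0 < n)%N -> 0 <= alpha n <= 1) /\
     (exists bet : R, bet < (3 + 2 * eps - Num.sqrt (8 * eps + 17)) / (2 * eps) /\
        forall n, (0 < n)%N -> 0 <= beta n /\ beta n <= beta n.+1 /\ beta n.+1 <= bet) /\
     (exists th : R, 0 < th /\
        forall n, (0 < n)%N -> th < theta n /\ theta n <= theta n.+1 /\
                              theta n.+1 <= 1 / (1 + eps)) /\
     (forall n, (0 < n)%N ->
        (1 - theta n) * beta n + theta n * alpha n <=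
        (1 - theta n.+1) * beta n.+1 + theta n.+1 * alpha n.+1) /\
     cvgn (series p) /\ mun @ \oo --> (0 : R)) ->
  (* Algorithm 3.1, n = 1, 2, ... (x 0, x 1 arbitrary) *)
  lam 1%N = lam1 ->
  (forall n, (0 < n)%N -> w n = x n + alpha n *: (x n - x n.-1)) ->
  (forall n, (0 < n)%N -> z n = x n + beta n *: (x n - x n.-1)) ->
  (forall n, (0 < n)%N -> y n \in resolvent B (lam n) (w n - lam n *: A (w n))) ->
  (forall n, (0 < n)%N ->
     lam n.+1 = if A (w n) != A (y n)
                then Num.min ((mun n + mu) * `|w n - y n| / `|A (w n) - A (y n)|)
                             (lam n + p n)
                else lam n + p n) ->
  (* the algorithm does not stop *)
  (forall n, (0 < n)%N -> w n != y n) ->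
  (forall n, (0 < n)%N ->
     x n.+1 = (1 - theta n) *: z n + theta n *: (y n - lam n *: (A (y n) - A (w n)))) ->
  exists q : H, zeros_sum A B q /\ x @ \oo --> q.
Proof.
move=> hip hops [pz [up [hBp hAp]]] /andP[hmu0 hmu1] hlam1 hmun hp
  [eps [heps [halpha [[bet [hbet hbeta]] [[th [hth htheta]] [ha [hps hmunc]]]]]]]
  hl1 hw hz hy hlam hne hx.
have [L [r [hL0 [hr0 [hlip hmonAB]]]]] : exists L r : R, 0 < L /\ 0 < r /\
    lipschitz_op L A /\ (forall yy v, B yy v ->
    r * `|yy - pz| ^+ 2 <= ip (v - up) (yy - pz) + ip (A yy - A pz) (yy - pz)).
  case: hops => [[L [r [hL [hr [hli [hsm [hBm _]]]]]]] | [L [r [hL [hr [hli [hm [[hBm _] hsB]]]]]]]];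
    exists L, r; (do 3 split => //); move=> yy v hv.
  - have := hBm yy pz v up hv hBp. have := hsm yy pz. lra.
  - have := hsB yy pz v up hv hBp. have := hm yy pz. lra.
have [hquad hbet1] := quad_pos _ _ heps hbet.
have hbet0 : 0 <= bet.
  have [h1 [h2 h3]] := hbeta 1%N isT. lra.
have hmonn : forall n, (0 < n)%N -> 0 <= lam n ->
    lam n * r * `|y n - pz| ^+ 2 <= ip ((w n - y n) - lam n *: (A (w n) - A (y n))) (y n - pz).
  move=> n hn hl. have := hy n hn. rewrite inE => -[v [hv heq]].
  apply: (mon_step hip A pz up (y n) (w n) v (lam n) r hAp _ hl (hmonAB _ _ hv)). by rewrite heq.
set lmin := Num.min lam1 (mu / L).
have hlmin : 0 < lmin by rewrite lt_min hlam1 divr_gt0.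
have hlamlb : forall n, (0 < n)%N -> lmin <= lam n.
  elim => [//|n IH _].
  case: n IH => [_|n IH]; first by rewrite hl1 ge_min lexx.
  have hn : (0 < n.+1)%N by [].
  have IHn := IH hn.
  have hpn := hp n.+1.
  rewrite hlam //; case: ifP => hA; last lra.
  rewrite le_min; apply/andP; split; last lra.
  have hAne : 0 < `|A (w n.+1) - A (y n.+1)|.
    by rewrite normr_gt0 subr_eq0.
  have hwy : 0 < `|w n.+1 - y n.+1| by rewrite normr_gt0 subr_eq0 hne.
  have hl := hlip (w n.+1) (y n.+1).
  rewrite ler_pdivlMr //.
  apply: le_trans (_ : mu / L * (L * `|w n.+1 - y n.+1|) <= _).
    apply: ler_pM; [exact: ltW hlmin | exact: normr_ge0 | by rewrite /lmin ge_min lexx orbT | exact: hl].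
  rewrite mulrA divfK; last by rewrite gt_eqF.
  apply: ler_wpM2r; first lra. have := hmun n.+1. lra.
have hlampos : forall n, (0 < n)%N -> 0 < lam n.
  move=> n hn; exact: lt_le_trans hlmin (hlamlb n hn).
have hlamc : cvgn lam.
  apply: (@lam_conv _ lam p _ _ hp hps).
    move=> n hn; exact: ltW (hlampos n hn).
  move=> n hn; rewrite hlam //; case: ifP => _; last lra.
  by rewrite ge_min lexx orbT.
set Lam := limn lam.
have hLam : lmin <= Lam.
  apply: limr_ge; first exact: hlamc.
  by exists 1%N => // k /= hk; apply: hlamlb.
set del := (1 + mu) / 2.
have hdel0 : 0 <= del by rewrite /del; lra.
have hdel1 : del < 1 by rewrite /del; lra.
have hf : (fun n => del * lam n.+1 - (mun n + mu) * lam n) @ \oo --> del * Lam - (0 + mu) * Lam.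
  apply: cvgB.
    apply: cvgM; first exact: cvg_cst.
    have : [sequence lam n.+1]_n @ \oo --> Lam by rewrite cvg_shiftS.
    done.
  apply: cvgM; last exact: hlamc.
  apply: cvgD; [exact: hmunc | exact: cvg_cst].
have hpos : 0 < del * Lam - (0 + mu) * Lam.
  rewrite add0r -mulrBl mulr_gt0 //; rewrite /del; lra.
have [N1 _ hN1] := cvgr_gt _ hf _ hpos.
set N0 := maxn N1 1.
have hN0 : forall n, (N0 <= n)%N -> (0 < n)%N /\ (N1 <= n)%N.
  move=> n hn; split; [exact: leq_trans (leq_maxr N1 1) hn | exact: leq_trans (leq_maxl N1 1) hn].
have hstepc : forall n, (N0 <= n)%N ->
    lam n * `|A (w n) - A (y n)| <= del * `|w n - y n|.
  move=> n hn. have [hn1 hnN1] := hN0 n hn.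
  have hf1 := hN1 n hnN1. simpl in hf1.
  have hwy : 0 < `|w n - y n| by rewrite normr_gt0 subr_eq0 hne.
  case: (eqVneq (A (w n)) (A (y n))) => hA.
    by rewrite hA subrr normr0 mulr0; apply: mulr_ge0.
  have := hlam n hn1; rewrite hA /= => hl.
  have hAne : 0 < `|A (w n) - A (y n)| by rewrite normr_gt0 subr_eq0.
  have hle : lam n.+1 <= (mun n + mu) * `|w n - y n| / `|A (w n) - A (y n)|.
    by rewrite hl ge_min lexx.
  have h2 : lam n.+1 * `|A (w n) - A (y n)| <= (mun n + mu) * `|w n - y n|.
    by rewrite -ler_pdivlMr.
  have hc : 0 < mun n + mu by have := hmun n; lra.
  have h3 : (mun n + mu) * lam n * `|A (w n) - A (y n)| <= del * lam n.+1 * `|A (w n) - A (y n)|.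
    apply: ler_wpM2r; [exact: normr_ge0 | lra].
  have h4 : del * lam n.+1 * `|A (w n) - A (y n)| <= del * ((mun n + mu) * `|w n - y n|).
    rewrite -mulrA; exact: ler_wpM2l.
  rewrite -(ler_pM2l hc). lra.
have hthn : forall n, (0 < n)%N ->
    [/\ th < theta n, theta n < 1, theta n <= theta n.+1 & theta n.+1 <= 1 / (1 + eps)].
  move=> n hn; have [h1 [h2 h3]] := htheta n hn.
  have : 1 / (1 + eps) < 1 by rewrite ltr_pdivrMr; lra.
  split => //; lra.
pose a n := (1 - theta n) * beta n + theta n * alpha n.
pose Gam n := `|x n - pz| ^+ 2 - a n * `|x n.-1 - pz| ^+ 2
   + (1 - theta n) / theta n * (1 - beta n) * `|x n - x n.-1| ^+ 2.
set G := Gc eps bet.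
set c1 := th * (1 - del ^+ 2).
set c2 := 2 * th * lmin * r.
have hdel2 : del ^+ 2 <= 1 by nra.
have hst : forall n, (N0 <= n)%N ->
    Gam n.+1 + G * `|x n - x n.-1| ^+ 2 + c1 * `|w n - y n| ^+ 2 + c2 * `|y n - pz| ^+ 2
    <= Gam n.
  move=> n hn. have [hn1 _] := hN0 n hn.
  have [ht1 ht2 ht3 ht4] := hthn n hn1.
  have [hb1 [hb2 hb3]] := hbeta n hn1.
  have /andP[hal0 hal1] := halpha n hn1.
  have hln := hlampos n hn1.
  have hvs := vstep hip (x n.+1) (x n) (x n.-1) pz (w n) (z n) (y n) (A (w n)) (A (y n))
    (theta n) (alpha n) (beta n) (lam n) r del (hw n hn1) (hz n hn1) (hx n hn1)
    (hmonn n hn1 (ltW hln)) (hstepc n hn) (ltW hln) hdel0 (lt_trans hth ht1) ht2 hb1.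
  have hly := lyap hvs heps hth ht1 ht3 ht4 hb1 hb2 hb3 hbet1 hal0 hal1 (ha n hn1)
    (exprn_ge0 2 (normr_ge0 _)) (exprn_ge0 2 (normr_ge0 _)) (exprn_ge0 2 (normr_ge0 _))
    (exprn_ge0 2 (normr_ge0 _)) (exprn_ge0 2 (normr_ge0 _)) hdel2 (hlamlb n hn1)
    (ltW hlmin) (ltW hr0) hquad.
  rewrite /G /c1 /c2 /Gam /a /=. lra.
have hG : 0 < G by rewrite /G /Gc divr_gt0 // exprn_gt0 //; lra.
have hdel2' : del ^+ 2 < 1 by nra.
have hc1 : 0 < c1 by rewrite /c1 mulr_gt0 //; lra.
have hc2 : 0 < c2 by rewrite /c2 !mulr_gt0.
have hnn : forall (v : H), 0 <= `|v| ^+ 2 by move=> v; exact: exprn_ge0.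
have hdec : forall n, (N0 <= n)%N -> Gam n.+1 <= Gam n.
  move=> n hn; have := hst n hn.
  have := hnn (x n - x n.-1); have := hnn (w n - y n); have := hnn (y n - pz).
  nra.
set abar := 1 - (1 - bet) / 2.
have habar : abar < 1 by rewrite /abar; lra.
have han : forall n, (0 < n)%N -> 0 <= a n <= abar.
  move=> n hn. have [ht1 ht2 ht3 ht4] := hthn n hn.
  have [hb1 [hb2 hb3]] := hbeta n hn.
  have /andP[hal0 hal1] := halpha n hn.
  have hth2 : theta n <= 1 / 2.
    have : 1 / (1 + eps) <= 1 / 2 by rewrite ler_pdivrMr; lra.
    lra.
  rewrite /a /abar; apply/andP; split; nra.
have hGlb : forall n, (0 < n)%N ->
    `|x n - pz| ^+ 2 - a n * `|x n.-1 - pz| ^+ 2 <= Gam n.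
  move=> n hn. have [ht1 ht2 ht3 ht4] := hthn n hn.
  have [hb1 [hb2 hb3]] := hbeta n hn.
  have hk : 0 <= (1 - theta n) / theta n * (1 - beta n).
    apply: mulr_ge0; last lra. apply: divr_ge0; lra.
  have := hnn (x n - x n.-1). rewrite /Gam. nra.
have hN0pos : (0 < N0)%N by have [] := hN0 N0 (leqnn _).
have hGN : forall k, Gam (N0 + k)%N <= Gam N0.
  elim => [|k IH]; first by rewrite addn0.
  rewrite addnS. apply: le_trans (IH). apply: hdec. exact: leq_addr.
set M := Num.max (`|x N0.-1 - pz| ^+ 2) (`|Gam N0| / (1 - abar)).
have hMk : forall k, `|x (N0.-1 + k)%N - pz| ^+ 2 <= M.
  elim => [|k IH]; first by rewrite addn0 /M le_max lexx.
  rewrite addnS.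
  have hk : (N0 <= (N0.-1 + k).+1)%N by rewrite -addSn prednK // leq_addr.
  have [hn1 _] := hN0 _ hk.
  have h1 := hGlb _ hn1. simpl in h1.
  have /andP[ha0 ha1] := han _ hn1.
  have h2 : Gam (N0.-1 + k).+1 <= Gam N0.
    have -> : (N0.-1 + k).+1 = (N0 + k)%N by rewrite -addSn prednK.
    exact: hGN.
  have h3 : `|Gam N0| <= (1 - abar) * M.
    rewrite mulrC -ler_pdivrMr; last lra. by rewrite /M le_max lexx orbT.
  have h4 : Gam N0 <= `|Gam N0| := ler_norm _.
  have h5 : a (N0.-1 + k).+1 * `|x (N0.-1 + k) - pz| ^+ 2 <= abar * M.
    apply: ler_pM; [exact: ha0 | exact: hnn | exact: ha1 | exact: IH].
  lra.
have hM0 : 0 <= M by rewrite /M le_max hnn.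
have hlb : forall n, (N0 <= n)%N -> - (abar * M) <= Gam n.
  move=> n hn. have [hn1 _] := hN0 n hn.
  have h1 := hGlb n hn1.
  have /andP[ha0 ha1] := han n hn1.
  have hxM : `|x n.-1 - pz| ^+ 2 <= M.
    have -> : n.-1 = (N0.-1 + (n.-1 - N0.-1))%N.
      rewrite subnKC //. by rewrite -!subn1 leq_sub2r.
    exact: hMk.
  have h5 : a n * `|x n.-1 - pz| ^+ 2 <= abar * M by apply: ler_pM; [exact: ha0 | exact: hnn | exact: ha1 | exact: hxM].
  have := hnn (x n - pz). lra.
have hconv := lyap_conv Gam N0 (- (abar * M)) hdec hlb.
exists pz; split; first by exists up.
apply/cvgrPdist_lt => e he.
set cm := Num.min G (Num.min c1 c2).
have hcm : 0 < cm by rewrite /cm !lt_min hG hc1 hc2.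
have he3 : 0 < e / 3 by rewrite divr_gt0.
have heta : 0 < cm * (e / 3) ^+ 2 by rewrite mulr_gt0 // exprn_gt0.
have [N2 _ hN2] := cvgr_lt _ hconv _ heta.
exists (maxn N0 N2) => // n /= hn.
have hnN0 : (N0 <= n)%N := leq_trans (leq_maxl N0 N2) hn.
have hnN2 : (N2 <= n)%N := leq_trans (leq_maxr N0 N2) hn.
have [hn1 _] := hN0 n hnN0.
have h1 := hN2 n hnN2. simpl in h1.
have h2 := hst n hnN0.
have hcmG : cm <= G by rewrite /cm ge_min lexx.
have hcm1 : cm <= c1 by rewrite /cm !ge_min lexx !orbT.
have hcm2 : cm <= c2 by rewrite /cm !ge_min lexx !orbT.
have hD := hnn (x n - x n.-1). have hW := hnn (w n - y n). have hY := hnn (y n - pz).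
have he9 : 0 <= (e / 3) ^+ 2 by rewrite exprn_ge0 // ltW.
have hm1 : cm * (e / 3) ^+ 2 <= G * (e / 3) ^+ 2 by apply: ler_wpM2r.
have hm2 : cm * (e / 3) ^+ 2 <= c1 * (e / 3) ^+ 2 by apply: ler_wpM2r.
have hm3 : cm * (e / 3) ^+ 2 <= c2 * (e / 3) ^+ 2 by apply: ler_wpM2r.
have hc1D : 0 <= c1 * `|w n - y n| ^+ 2 by apply: mulr_ge0 => //; exact: ltW.
have hc2Y : 0 <= c2 * `|y n - pz| ^+ 2 by apply: mulr_ge0 => //; exact: ltW.
have hGD : 0 <= G * `|x n - x n.-1| ^+ 2 by apply: mulr_ge0 => //; exact: ltW.
have hd : `|x n - x n.-1| < e / 3.
  apply: sq_lt; [exact: normr_ge0 | exact: he3 | ]. rewrite -(ltr_pM2l hG). lra.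
have hwy : `|w n - y n| < e / 3.
  apply: sq_lt; [exact: normr_ge0 | exact: he3 | ]. rewrite -(ltr_pM2l hc1). lra.
have hyp : `|y n - pz| < e / 3.
  apply: sq_lt; [exact: normr_ge0 | exact: he3 | ]. rewrite -(ltr_pM2l hc2). lra.
have hv : pz - x n = alpha n *: (x n - x n.-1) - (w n - y n) - (y n - pz).
  rewrite (hw n hn1). apply: (veq hip) => q; ipexp hip; ring.
rewrite hv.
have /andP[hal0 hal1] := halpha n hn1.
have t1 := ler_normD (alpha n *: (x n - x n.-1) - (w n - y n)) (- (y n - pz)).
have t2 := ler_normD (alpha n *: (x n - x n.-1)) (- (w n - y n)).
rewrite !normrN in t1 t2.
have t3 : `|alpha n *: (x n - x n.-1)| <= `|x n - x n.-1|.
  rewrite normrZ ger0_norm //. rewrite -[X in _ <= X]mul1r. apply: ler_wpM2r => //.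
lra.
Qed.
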